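(* Let $\mathcal{H}$ and $\mathcal{K}$ be graded connected Hopf algebras over a field $\Bbbk$ of characteristic different from $2$, let $\varphi:\mathcal{H}\to\Bbbk$ and $\psi:\mathcal{K}\to\Bbbk$ be characters, and let $\Phi:\mathcal{H}\to\mathcal{K}$ be a morphism of graded Hopf algebras with $\psi\circ\Phi=\varphi$. Then $\psi_+\circ\Phi=\varphi_+$ and $\psi_-\circ\Phi=\varphi_-$.
   Context: A character on a Hopf algebra $\mathcal{H}$ is an algebra morphism $\mathcal{H}\to\Bbbk$. The convolution product of linear functionals $\rho,\psi:\mathcal{H}\to\Bbbk$ is $\rho\psi=m\circ(\rho\otimes\psi)\circ\Delta$, where $\Delta$ is the coproduct of $\mathcal{H}$ and $m$ the multiplication of $\Bbbk$; characters form a group under convolution with unit the counit $\epsilon$. For a graded Hopf algebra and a functional $\varphi$, define $\bar\varphi(h)=(-1)^n\varphi(h)$ for $h$ homogeneous of degree $n$. A functional $\varphi$ is even if $\bar\varphi=\varphi$, and odd if it is convolution-invertible and $\bar\varphi=\varphi^{-1}$. On a graded connected Hopf algebra (degree-$0$ part equal to $\Bbbk\cdot 1$) every character $\varphi$ factors uniquely as $\varphi=\varphi_+\varphi_-$ (convolution product) with $\varphi_+$ an even character and $\varphi_-$ an odd character; $\varphi_+$ and $\varphi_-$ are called the even and odd parts of $\varphi$. *)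

(* Defs.v *)
(* MathComp has no tensor products, so an element of H (x) H is represented
   by a finite list of pairs [:: (a_1,b_1); ...] standing for sum_i a_i (x) b_i.
   Two such lists represent the same tensor iff every pair of linear
   functionals f, g takes the same value sum_i f a_i * g b_i on them (over a
   field, H* (x) H* separates the points of H (x) H); [tens_eq] is this
   equality. *)
From HB Require Import structures.
From mathcomp Require Import all_boot all_order all_algebra.

Set Implicit Arguments.
Unset Strict Implicit.
Unset Printing Implicit Defensive.

Import GRing.Theory.
Local Open Scope ring_scope.

Section Hopf.
Variable k : fieldType.

Definition klinear (U V : lmodType k) (f : U -> V) : Prop :=
  forall (a : k) (x y : U), f (a *: x + y) = a *: f x + f y.

Definition lfun (U : lmodType k) (f : U -> k) : Prop :=
  forall (a : k) (x y : U), f (a *: x + y) = a * f x + f y.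

Definition tens_eq (U V : lmodType k) (s t : seq (U * V)) : Prop :=
  forall (f : U -> k) (g : V -> k), lfun f -> lfun g ->
    \sum_(p <- s) f p.1 * g p.2 = \sum_(p <- t) f p.1 * g p.2.

Record hopf_data (H : algType k) := HopfData {
  coprod : H -> seq (H * H);
  counit : H -> k;
  antipode : H -> H;
  gproj : nat -> H -> H;
  gbound : H -> nat              (* the components of x vanish in degrees >= gbound x *)
}.

Section Laws.
Variables (H : algType k) (D : hopf_data H).
Local Notation Delta := (coprod D).
Local Notation eps := (counit D).
Local Notation S := (antipode D).
Local Notation pi := (gproj D).

Definition hopf_laws : Prop :=
  [/\ forall (a : k) (x y : H),
        tens_eq (Delta (a *: x + y)) ([seq (a *: p.1, p.2) | p <- Delta x] ++ Delta y),
  (* coassociativity, tested in H (x) H (x) H by triples of functionals *)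
      forall (x : H) (f g h : H -> k), lfun f -> lfun g -> lfun h ->
        \sum_(p <- Delta x) (\sum_(q <- Delta p.1) f q.1 * g q.2) * h p.2
        = \sum_(p <- Delta x) f p.1 * (\sum_(q <- Delta p.2) g q.1 * h q.2),
      lfun eps /\ forall x : H,
        \sum_(p <- Delta x) eps p.1 *: p.2 = x /\ \sum_(p <- Delta x) eps p.2 *: p.1 = x,
      [/\ tens_eq (Delta 1) [:: (1, 1)],
          forall x y : H, tens_eq (Delta (x * y))
              [seq (p.1 * q.1, p.2 * q.2) | p <- Delta x, q <- Delta y],
          eps 1 = 1 &
          forall x y : H, eps (x * y) = eps x * eps y] &
      klinear S /\ forall x : H,
        \sum_(p <- Delta x) S p.1 * p.2 = eps x *: 1 /\
        \sum_(p <- Delta x) p.1 * S p.2 = eps x *: 1].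

Definition homogeneous (n : nat) (x : H) : Prop := pi n x = x.

Definition graded_laws : Prop :=
  [/\ (* H = (+)_n H_n, with pi n the projections *)
      forall n, klinear (pi n),
      forall n m (x : H), pi n (pi m x) = if n == m then pi m x else 0,
      forall (x : H), (forall n, (gbound D x <= n)%N -> pi n x = 0) /\
                      x = \sum_(n < gbound D x) pi n x,
      homogeneous 0 1 /\ forall i j (x y : H),
        homogeneous i x -> homogeneous j y -> homogeneous (i + j) (x * y) &
      [/\ forall n (x : H), homogeneous n x ->
            tens_eq (Delta x)
              [seq (pi i p.1, pi (n - i)%N p.2) | i <- iota 0 n.+1, p <- Delta x],
          forall n (x : H), homogeneous n x -> (0 < n)%N -> eps x = 0 &
          forall n (x : H), homogeneous n x -> homogeneous n (S x)]].

Definition connected : Prop :=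
  forall x : H, homogeneous 0 x -> exists c : k, x = c%:A.

Definition graded_connected_hopf : Prop :=
  [/\ hopf_laws, graded_laws & connected].

Definition conv (rho chi : H -> k) : H -> k :=
  fun x => \sum_(p <- Delta x) rho p.1 * chi p.2.

Definition character (f : H -> k) : Prop :=
  [/\ lfun f, forall x y : H, f (x * y) = f x * f y & f 1 = 1].

Definition bar (f : H -> k) : H -> k :=
  fun x => \sum_(n < gbound D x) (-1) ^+ n * f (pi n x).

Definition even_fun (f : H -> k) : Prop := bar f =1 f.

Definition odd_fun (f : H -> k) : Prop :=
  exists g : H -> k, [/\ lfun g, conv f g =1 eps, conv g f =1 eps & bar f =1 g].

End Laws.

Definition graded_hopf_morphism (H K : algType k) (DH : hopf_data H)
    (DK : hopf_data K) (Phi : H -> K) : Prop :=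
  [/\ klinear Phi,
      Phi 1 = 1 /\ forall x y : H, Phi (x * y) = Phi x * Phi y,
      forall x : H, tens_eq (coprod DK (Phi x))
                            [seq (Phi p.1, Phi p.2) | p <- coprod DH x],
      forall x : H, counit DK (Phi x) = counit DH x &
      (forall x : H, antipode DK (Phi x) = Phi (antipode DH x)) /\
      (forall n (x : H), gproj DK n (Phi x) = Phi (gproj DH n x))].

End Hopf.

(* Main.v *)
Require Import Defs.
From HB Require Import structures.
From mathcomp Require Import all_boot all_order all_algebra.
From mathcomp Require Import zify.
Local Open Scope ring_scope.

Set Implicit Arguments.
Unset Strict Implicit.
Unset Printing Implicit Defensive.
Import GRing.Theory.

Section Lin.
Variable k : fieldType.
Variable U : lmodType k.
Variable f : U -> k.
Hypothesis hf : lfun f.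

Lemma lfun0 : f 0 = 0.
Proof.
have := hf 1 0 0; rewrite scale1r addr0 mul1r => e.
by apply: (addrI (f 0)); rewrite addr0 -e.
Qed.

Lemma lfunD x y : f (x + y) = f x + f y.
Proof. by have := hf 1 x y; rewrite scale1r mul1r. Qed.

Lemma lfunZ a x : f (a *: x) = a * f x.
Proof. by have := hf a x 0; rewrite !addr0 lfun0 addr0. Qed.

Lemma lfun_sum (I : Type) (r : seq I) (P : pred I) (F : I -> U) :
  f (\sum_(i <- r | P i) F i) = \sum_(i <- r | P i) f (F i).
Proof. exact: (big_morph f lfunD lfun0). Qed.

Lemma lfun_comp (V : lmodType k) (g : V -> U) : klinear g -> lfun (f \o g).
Proof. by move=> hg a x y /=; rewrite hg hf. Qed.

Lemma lfun_sumZ (I : Type) (r : seq I) (c : I -> k) (F : I -> U) :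
  f (\sum_(i <- r) c i *: F i) = \sum_(i <- r) c i * f (F i).
Proof. by rewrite lfun_sum; apply: eq_bigr => i _; rewrite lfunZ. Qed.

End Lin.

Section Gr.
Variables (k : fieldType) (H : algType k) (D : hopf_data H).
Hypothesis hH : graded_connected_hopf D.
Local Notation pi := (gproj D).
Local Notation eps := (counit D).
Local Notation Delta := (coprod D).

Lemma pi_idem n y : pi n (pi n y) = pi n y.
Proof. by case: hH => _ [_ h2 _ _ _] _; rewrite h2 eqxx. Qed.

Lemma pi_lin n : klinear (pi n).
Proof. by case: hH => _ [h1 _ _ _ _] _. Qed.

Lemma decomp (f : H -> k) y : lfun f -> f y = \sum_(m < gbound D y) f (pi m y).
Proof.
move=> hf; case: hH => _ [_ _ h3 _ _] _; have [_ e] := h3 y.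
transitivity (f (\sum_(m < gbound D y) pi m y)); first by rewrite -e.
by rewrite lfun_sum.
Qed.

Lemma bar_homog (f : H -> k) n y : lfun f -> homogeneous D n y ->
  bar D f y = (-1) ^+ n * f y.
Proof.
move=> hf hy; case: hH => _ [_ h2 _ _ _] _.
rewrite /bar (decomp y hf) mulr_sumr; apply: eq_bigr => m _.
have z : forall j : nat, j != n -> pi j y = 0.
  by move=> j ne; rewrite -hy h2 (negbTE ne).
case: (eqVneq (m : nat) n) => [->//|ne].
rewrite z //.
by rewrite lfun0 // !mulr0.
Qed.

Lemma eps_lfun : lfun eps.
Proof. by case: hH => [[_ _ [h _] _ _] _ _]. Qed.

Lemma pi0_eps (f : H -> k) y : lfun f -> f 1 = 1 -> f (pi 0 y) = eps y.
Proof.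
move=> hf f1; case: hH => [[_ _ _ [_ _ e1 _] _] [_ _ h3 _ [_ h5 _]] hc].
have [c ec] := hc _ (pi_idem 0 y).
have -> : f (pi 0 y) = eps (pi 0 y).
  by rewrite ec (lfunZ hf) (lfunZ eps_lfun) f1 e1.
rewrite [RHS](decomp y eps_lfun).
case E: (gbound D y) => [|N].
  rewrite big_ord0; have [hb _] := h3 y.
  by rewrite hb ?E // (lfun0 eps_lfun).
rewrite big_ord_recl /= big1 ?addr0 // => i _.
by apply: (h5 (lift ord0 i)); [exact: pi_idem|].
Qed.

Definition mid (f g : H -> k) n x :=
  \sum_(i <- iota 1 n.-1) \sum_(p <- Delta x) f (pi i p.1) * g (pi (n - i) p.2).

Lemma conv_expand (f g : H -> k) n x : lfun f -> lfun g -> f 1 = 1 -> g 1 = 1 ->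
  homogeneous D n x -> (0 < n)%N -> conv D f g x = g x + (mid f g n x + f x).
Proof.
move=> hf hg f1 g1 hx n0.
case: hH => [[_ _ [_ hce] _ _] [_ _ _ _ [h6 _ _]] _].
rewrite /conv (h6 n x hx f g hf hg) big_allpairs_dep /=.
case: n n0 hx => // m _ hx.
have -> : iota 1 m.+1 = iota 1 m ++ [:: m.+1].
  by have := iotaD 1 m 1; rewrite addn1 => ->; rewrite add1n.
rewrite big_cons big_cat big_seq1 /= subn0 subnn.
congr (_ + (_ + _)).
- under eq_bigr => p _ do rewrite pi0_eps //.
  rewrite -(lfun_sumZ (lfun_comp hg (pi_lin _))) /= (proj1 (hce x)).
  by rewrite hx.
- under eq_bigr => p _ do rewrite (pi0_eps _ hg g1) mulrC.
  rewrite -(lfun_sumZ (lfun_comp hf (pi_lin _))) /= (proj2 (hce x)).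
  by rewrite hx.
Qed.

Lemma mid_eq (f1 g1 f2 g2 : H -> k) n x :
  (forall i y, (0 < i < n)%N -> homogeneous D i y -> f1 y = f2 y) ->
  (forall i y, (0 < i < n)%N -> homogeneous D i y -> g1 y = g2 y) ->
  mid f1 g1 n x = mid f2 g2 n x.
Proof.
move=> hf hg; rewrite /mid !big_seq; apply: eq_bigr => i.
rewrite mem_iota => /andP[i1 i2]; apply: eq_bigr => p _.
rewrite (hf i) ?(hg (n - i)%N) //; try exact: pi_idem; lia.
Qed.

Lemma even_vanish (f : H -> k) n x : (2%:R : k) != 0 -> lfun f -> even_fun D f ->
  homogeneous D n x -> odd n -> f x = 0.
Proof.
move=> h2 hf he hx on.
have := he x; rewrite (bar_homog hf hx) -signr_odd on expr1 mulN1r => e.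
have : f x * 2%:R = 0 by rewrite mulr_natr mulr2n -{1}e addNr.
by move/eqP; rewrite mulf_eq0 (negbTE h2) orbF => /eqP.
Qed.

Lemma uniq_decomp (h2 : (2%:R : k) != 0) (u v a b gv gb : H -> k) :
  lfun u -> lfun v -> lfun a -> lfun b -> lfun gv -> lfun gb ->
  u 1 = 1 -> v 1 = 1 -> a 1 = 1 -> b 1 = 1 ->
  (forall n x, homogeneous D n x -> odd n -> u x = 0) ->
  (forall n x, homogeneous D n x -> odd n -> a x = 0) ->
  (forall x, conv D v gv x = eps x) -> (forall x, conv D b gb x = eps x) ->
  (forall n x, homogeneous D n x -> gv x = (-1) ^+ n * v x) ->
  (forall n x, homogeneous D n x -> gb x = (-1) ^+ n * b x) ->
  (forall x, conv D u v x = conv D a b x) ->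
  forall x, u x = a x /\ v x = b x.
Proof.
move=> lu lv la lb lgv lgb u1 v1 a1 b1 uo ao cv cb gvh gbh cuv.
have hom1 : homogeneous D 0 1 by case: hH => _ [_ _ _ [h _] _] _.
have gv1 : gv 1 = 1 by rewrite (gvh 0%N) // v1 mulr1.
have gb1 : gb 1 = 1 by rewrite (gbh 0%N) // b1 mulr1.
suff P : forall n x, homogeneous D n x -> u x = a x /\ v x = b x.
  move=> x; split.
    rewrite (decomp x lu) (decomp x la); apply: eq_bigr => m _.
    by case: (P m _ (pi_idem m x)).
  rewrite (decomp x lv) (decomp x lb); apply: eq_bigr => m _.
  by case: (P m _ (pi_idem m x)).
elim/ltn_ind => n IH x hx.
case: n IH hx => [|m] IH hx.
  case: hH => _ _ hc; have [c ->] := hc _ hx.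
  by rewrite !lfunZ // u1 v1 a1 b1.
have Hu : forall i y, (0 < i < m.+1)%N -> homogeneous D i y -> u y = a y.
  by move=> i y /andP[_ lt] hy; case: (IH i lt y hy).
have Hv : forall i y, (0 < i < m.+1)%N -> homogeneous D i y -> v y = b y.
  by move=> i y /andP[_ lt] hy; case: (IH i lt y hy).
have Hg : forall i y, (0 < i < m.+1)%N -> homogeneous D i y -> gv y = gb y.
  by move=> i y hi hy; rewrite (gvh i) // (gbh i) // (Hv i).
have e1 := cuv x.
rewrite (conv_expand lu lv u1 v1 hx) // (conv_expand la lb a1 b1 hx) //
  (mid_eq _ Hu Hv) in e1.
have vb : v x = b x.
  case: (boolP (odd m.+1)) => om.
    move: e1; rewrite (uo _ _ hx om) (ao _ _ hx om) !addr0.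
    by move/addIr.
  have e2 : conv D v gv x = conv D b gb x by rewrite cv cb.
  rewrite (conv_expand lv lgv v1 gv1 hx) // (conv_expand lb lgb b1 gb1 hx) //
    (mid_eq _ Hv Hg) (gvh _ _ hx) (gbh _ _ hx) -signr_odd (negbTE om) expr0 !mul1r in e2.
  move: e2; rewrite addrCA [RHS]addrCA => /addrI.
  by move=> e; apply: (mulIf h2); rewrite !mulr_natr !mulr2n.
split=> //; move: e1; rewrite vb => /addrI/addrI //.
Qed.

End Gr.

Theorem lemma2p2 (k : fieldType) (hk : (2 \notin [pchar k])%N)
  (H K : algType k) (DH : hopf_data H) (DK : hopf_data K)
  (hH : graded_connected_hopf DH) (hK : graded_connected_hopf DK)
  (phi : H -> k) (psi : K -> k)
  (hphi : character phi) (hpsi : character psi)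
  (Phi : H -> K) (hPhi : graded_hopf_morphism DH DK Phi)
  (hcomp : forall x : H, psi (Phi x) = phi x)
  (phip phim : H -> k) (psip psim : K -> k)
  (hphip : character phip /\ even_fun DH phip)
  (hphim : character phim /\ odd_fun DH phim)
  (hphid : phi =1 conv DH phip phim)
  (hpsip : character psip /\ even_fun DK psip)
  (hpsim : character psim /\ odd_fun DK psim)
  (hpsid : psi =1 conv DK psip psim) :
  (forall x : H, psip (Phi x) = phip x) /\ (forall x : H, psim (Phi x) = phim x).
Proof.
have h2 : (2%:R : k) != 0.
  by apply: contra hk => e; rewrite inE /= e.
case: hphip => [[lphip _ phip1] ephip].
case: hphim => [[lphim _ phim1] [gphim [lgphim cphim _ bphim]]].
case: hpsip => [[lpsip _ psip1] epsip].
case: hpsim => [[lpsim _ psim1] [gpsim [lgpsim cpsim _ bpsim]]].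
case: hPhi => [kPhi [Phi1 _] tPhi ePhi [_ pPhi]].
have homK : forall n x, homogeneous DH n x -> homogeneous DK n (Phi x).
  by move=> n x hx; rewrite /homogeneous pPhi hx.
have convPhi : forall (f g : K -> k), lfun f -> lfun g -> forall x,
    conv DK f g (Phi x) = conv DH (f \o Phi) (g \o Phi) x.
  by move=> f g hf hg x; rewrite /conv (tPhi x f g hf hg) big_map.
have := @uniq_decomp _ _ DH hH h2 phip phim (psip \o Phi) (psim \o Phi)
  gphim (gpsim \o Phi) lphip lphim (lfun_comp lpsip kPhi) (lfun_comp lpsim kPhi)
  lgphim (lfun_comp lgpsim kPhi) phip1 phim1.
rewrite /= Phi1 psip1 psim1 => /(_ erefl erefl).
move=> /(_ (fun n x hx on => even_vanish hH h2 lphip ephip hx on)).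
move=> /(_ (fun n x hx on => even_vanish hK h2 lpsip epsip (homK _ _ hx) on)).
move=> /(_ cphim).
have cb : forall x, conv DH (psim \o Phi) (gpsim \o Phi) x = counit DH x.
  by move=> x; rewrite -convPhi // cpsim ePhi.
move=> /(_ cb).
have gh : forall n x, homogeneous DH n x -> gphim x = (-1) ^+ n * phim x.
  by move=> n x hx; rewrite -bphim (bar_homog hH lphim hx).
move=> /(_ gh).
have gh2 : forall n x, homogeneous DH n x ->
    (gpsim \o Phi) x = (-1) ^+ n * (psim \o Phi) x.
  by move=> n x hx /=; rewrite -bpsim (bar_homog hK lpsim (homK _ _ hx)).
move=> /(_ gh2).
have cc : forall x, conv DH phip phim x = conv DH (psip \o Phi) (psim \o Phi) x.
  by move=> x; rewrite -hphid -hcomp hpsid convPhi.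
move=> /(_ cc) P.
by split=> x; case: (P x).
Qed.
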